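(* Let $S \cdot I$ be a well-formed instrumented notebook state and let $op$ be any notebook operation ($\textsc{Run}(i)$, $\textsc{Edit}(i,c)$, $\textsc{Insert}(i,c)$, $\textsc{Delete}(i)$ or $\textsc{Move}(s,d)$). If $S \cdot I \xRightarrow{op} S' \cdot I'$ is a transition of the instrumented semantics, then $S' \cdot I'$ is well-formed.
   Context: Locations and stores. $\mathrm{Loc}$ is a set of locations (top-level variable names $x$, and DataFrame columns $d.c$ where $d$ is an immutable DataFrame address and $c$ a column name). $\mathrm{Val}$ is a set of values. A store is a map $\Sigma : \mathrm{Loc} \to \mathrm{Val}$, and $\emptyset$ denotes the empty store. $\mathit{Code}$ and $\mathit{Output}$ are unspecified sets; the output $\bot$ means ''not yet executed''. Cell evaluation. Standard cell evaluation is a given relation (a black box modelling the language runtime) written $c;\Sigma \Downarrow o \cdot \Sigma'$: executing code $c$ in store $\Sigma$ produces output $o$ and resulting store $\Sigma'$. Instrumented cell evaluation $c;\Sigma \Downarrow o \cdot \Sigma' \cdot r \cdot w$ extends it: it holds when $c;\Sigma \Downarrow o\cdot\Sigma'$, $r \subseteq \mathrm{Loc}$ is the set of locations of $\Sigma$ read during the evaluation of $c$, and $w \subseteq \mathrm{Loc}$ is the set of locations where $\Sigma'$ is updated from $\Sigma$. Notation. For a sequence $X = X_1,\dots,X_n$, $X_{i..j}$ is the subsequence $X_i,\dots,X_j$, and $X[i:=v]$ is $X$ with position $i$ replaced by $v$. For a sequence of sets $W$, $\bigcup W_{i..j} = W_i \cup \dots \cup W_j$ (empty if $i>j$). Notebook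 states. A notebook state is $S = (C, O, \Sigma)$ with $C = C_1,\dots,C_n$ cell codes, $O = O_1,\dots,O_n$ cell outputs, and $\Sigma$ the current store. An instrumentation is $I = (T, R, W)$ with tags $T_i \in \{\textsc{clean}, \textsc{stale}\}$, read sets $R_i \subseteq \mathrm{Loc}$ and write sets $W_i \subseteq \mathrm{Loc}$ for $i = 1,\dots,n$. Rerun consistency. $R$ and $W$ are rerun consistent for cell $i$ if all of: (NoReadAndWrite) $R_i \cap W_i = \emptyset$; (WriteAboveRead) $R_i \subseteq \bigcup W_{1..i-1}$; (NoReadAboveWrite) $R_i \cap \bigcup W_{i+1..n} = \emptyset$; (NoWriteBelowRead) $W_i \cap \bigcup R_{1..i-1} = \emptyset$. Staleness predicates. $\textsc{ForwardStale}(R,W,W',i,j)$ holds iff $j > i$ and $(W_i \cup W'_i) \cap (R_j \cup W_j) \neq \emptyset$. $\textsc{LastWriter}(W,i,\ell) = \max\{k < i \mid \ell \in W_k\}$. $\textsc{BackwardStale}(W,W',i,j)$ holds iff $j < i$ and $j = \textsc{LastWriter}(W,i,\ell)$ for some $\ell \in W_i \setminus W'_i$. Instrumented semantics $S\cdot I \xRightarrow{op} S'\cdot I'$: - $\textsc{Run}(i)$: if $S = (C,O,\Sigma)$, $C_i;\Sigma \Downarrow o\cdot\Sigma'\cdot r\cdot w$, $R' = R[i:=r]$, $W' = W[i:=w]$, and $R',W'$ are rerun consistent for $i$, then $(C,O,\Sigma)\cdot(T,R,W) \xRightarrow{\textsc{Run}(i)} (C, O[i:=o], \Sigma')\cdot(T',R',W')$,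 where $T'_j = \textsc{clean}$ if $j = i$; $T'_j = \textsc{stale}$ if $\textsc{ForwardStale}(R,W,W',i,j)$ or $\textsc{BackwardStale}(W,W',i,j)$; and $T'_j = T_j$ otherwise. - $\textsc{Edit}(i,c)$: $C$ becomes $C[i:=c]$; $O$, $\Sigma$, $R$, $W$ unchanged; $T$ becomes $T[i:=\textsc{stale}]$. - $\textsc{Insert}(i,c)$: $C' = C_{1..i-1}, c, C_{i..n}$; $O' = O_{1..i-1}, \bot, O_{i..n}$; $\Sigma$ unchanged; $R' = R_{1..i-1},\emptyset,R_{i..n}$; $W' = W_{1..i-1},\emptyset,W_{i..n}$; $T' = T_{1..i-1},\textsc{stale},T_{i..n}$. - $\textsc{Delete}(i)$: $C' = C_{1..i-1},C_{i+1..n}$; $O' = O_{1..i-1},O_{i+1..n}$; $\Sigma$ unchanged; with $R'' = R[i:=\emptyset]$, $W'' = W[i:=\emptyset]$, let $T''_j = \textsc{stale}$ if $\textsc{ForwardStale}(R,W,W'',i,j)$ or $\textsc{BackwardStale}(W,W'',i,j)$, and $T''_j = T_j$ otherwise; then $R' = R''_{1..i-1},R''_{i+1..n}$, $W' = W''_{1..i-1},W''_{i+1..n}$, $T' = T''_{1..i-1},T''_{i+1..n}$. - $\textsc{Move}(s,d)$: if $s < d$, it is $\textsc{Delete}(s)$ followed by $\textsc{Insert}(d-1, C_s)$; if $s > d$, it is $\textsc{Delete}(s)$ followed by $\textsc{Insert}(d, C_s)$. Well-formedness. $S\cdot I = (C,O,\Sigma)\cdot(T,R,W)$ is well-formed if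 for every $i$ with $T_i = \textsc{clean}$ there exists a store $\Sigma'$ such that (1) $C_i;\Sigma \Downarrow O_i\cdot\Sigma'\cdot R_i\cdot W_i$; (2) $\Sigma$ and $\Sigma'$ agree on every location not in $\bigcup W_{i+1..n}$; (3) $R$ and $W$ are rerun consistent for $i$. *)

(* Defs.v *)
(* Sequences X_1..X_n are functions nat -> X together with the
   length n (only positions 1..n are meaningful).  Sets of locations are
   predicates Loc -> Prop. *)
From Stdlib Require Import Arith.
Set Implicit Arguments.

Section Defs.
Variables (Code Output Loc Val : Type).

Definition lset := Loc -> Prop.
Definition store := Loc -> Val.
Definition lempty : lset := fun _ => False.

Definition disjoint (A B : lset) : Prop := forall l, A l -> B l -> False.
Definition subset (A B : lset) : Prop := forall l, A l -> B l.

Definition bigU (W : nat -> lset) (i j : nat) : lset :=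
  fun l => exists k, i <= k /\ k <= j /\ W k l.

Definition upd {X : Type} (s : nat -> X) (i : nat) (v : X) : nat -> X :=
  fun k => if Nat.eqb k i then v else s k.
Definition ins {X : Type} (s : nat -> X) (i : nat) (v : X) : nat -> X :=
  fun k => if Nat.ltb k i then s k else if Nat.eqb k i then v else s (k - 1).
Definition del {X : Type} (s : nat -> X) (i : nat) : nat -> X :=
  fun k => if Nat.ltb k i then s k else s (k + 1).

Inductive tag := Clean | Stale.

Record nbstate := NbState { nb_n : nat; nb_C : nat -> Code; nb_O : nat -> Output; nb_Sigma : store }.
Record instr := Instr { in_T : nat -> tag; in_R : nat -> lset; in_W : nat -> lset }.

Inductive op := Run (i : nat) | Edit (i : nat) (c : Code) | Insert (i : nat) (c : Code)
              | Delete (i : nat) | Move (s d : nat).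

(* Instrumented evaluation  c;Σ ⇓ o·Σ'·r·w  (a black box), with its specification:
   it refines standard evaluation, w contains every location where Σ' is updated
   from Σ, and r is the set of locations read: running in any store agreeing on r
   yields the same output, reads, writes and written values. *)
Definition ieval_type := Code -> store -> Output -> store -> lset -> lset -> Prop.
Definition eval_type := Code -> store -> Output -> store -> Prop.

Definition instrumented_eval (eval : eval_type) (ieval : ieval_type) : Prop :=
  (forall c S o S' r w, ieval c S o S' r w -> eval c S o S') /\
  (forall c S o S' r w, ieval c S o S' r w -> forall l, ~ w l -> S' l = S l) /\
  (forall c S1 o S1' r w S2, ieval c S1 o S1' r w ->
     (forall l, r l -> S1 l = S2 l) ->
     exists S2', ieval c S2 o S2' r w /\ (forall l, w l -> S2' l = S1' l)).

Definition rerun_consistent (n : nat) (R W : nat -> lset) (i : nat) : Prop :=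
  disjoint (R i) (W i) /\
  subset (R i) (bigU W 1 (i - 1)) /\
  disjoint (R i) (bigU W (i + 1) n) /\
  disjoint (W i) (bigU R 1 (i - 1)).

Definition ForwardStale (R W W' : nat -> lset) (i j : nat) : Prop :=
  j > i /\ exists l, (W i l \/ W' i l) /\ (R j l \/ W j l).

Definition is_LastWriter (W : nat -> lset) (i : nat) (l : Loc) (j : nat) : Prop :=
  1 <= j /\ j < i /\ W j l /\ (forall k, j < k -> k < i -> ~ W k l).

Definition BackwardStale (W W' : nat -> lset) (i j : nat) : Prop :=
  j < i /\ exists l, (W i l /\ ~ W' i l) /\ is_LastWriter W i l j.

Definition stale_update (T : nat -> tag) (R W W' : nat -> lset) (i : nat) (T' : nat -> tag) : Prop :=
  forall j,
    (j = i -> T' j = Clean) /\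
    (j <> i -> (ForwardStale R W W' i j \/ BackwardStale W W' i j) -> T' j = Stale) /\
    (j <> i -> ~ (ForwardStale R W W' i j \/ BackwardStale W W' i j) -> T' j = T j).

Definition stale_mark (T : nat -> tag) (R W W' : nat -> lset) (i : nat) (T' : nat -> tag) : Prop :=
  forall j,
    ((ForwardStale R W W' i j \/ BackwardStale W W' i j) -> T' j = Stale) /\
    (~ (ForwardStale R W W' i j \/ BackwardStale W W' i j) -> T' j = T j).

Inductive step (bot : Output) (ieval : ieval_type) :
    nbstate -> instr -> op -> nbstate -> instr -> Prop :=
| step_run : forall n C O Sg T R W i o Sg' r w T',
    1 <= i <= n ->
    ieval (C i) Sg o Sg' r w ->
    rerun_consistent n (upd R i r) (upd W i w) i ->
    stale_update T R W (upd W i w) i T' ->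
    step bot ieval (NbState n C O Sg) (Instr T R W) (Run i)
                   (NbState n C (upd O i o) Sg') (Instr T' (upd R i r) (upd W i w))
| step_edit : forall n C O Sg T R W i c,
    1 <= i <= n ->
    step bot ieval (NbState n C O Sg) (Instr T R W) (Edit i c)
                   (NbState n (upd C i c) O Sg) (Instr (upd T i Stale) R W)
| step_insert : forall n C O Sg T R W i c,
    1 <= i <= n + 1 ->
    step bot ieval (NbState n C O Sg) (Instr T R W) (Insert i c)
                   (NbState (n + 1) (ins C i c) (ins O i bot) Sg)
                   (Instr (ins T i Stale) (ins R i lempty) (ins W i lempty))
| step_delete : forall n C O Sg T R W i T'',
    1 <= i <= n ->
    stale_mark T R W (upd W i lempty) i T'' ->
    step bot ieval (NbState n C O Sg) (Instr T R W) (Delete i)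
                   (NbState (n - 1) (del C i) (del O i) Sg)
                   (Instr (del T'' i) (del (upd R i lempty) i) (del (upd W i lempty) i))
| step_move_down : forall S I s d S1 I1 S2 I2,
    s < d ->
    step bot ieval S I (Delete s) S1 I1 ->
    step bot ieval S1 I1 (Insert (d - 1) (nb_C S s)) S2 I2 ->
    step bot ieval S I (Move s d) S2 I2
| step_move_up : forall S I s d S1 I1 S2 I2,
    s > d ->
    step bot ieval S I (Delete s) S1 I1 ->
    step bot ieval S1 I1 (Insert d (nb_C S s)) S2 I2 ->
    step bot ieval S I (Move s d) S2 I2.

Definition well_formed (ieval : ieval_type) (S : nbstate) (I : instr) : Prop :=
  forall i, 1 <= i <= nb_n S -> in_T I i = Clean ->
    exists Sg', ieval (nb_C S i) (nb_Sigma S) (nb_O S i) Sg' (in_R I i) (in_W I i) /\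
      (forall l, ~ bigU (in_W I) (i + 1) (nb_n S) l -> nb_Sigma S l = Sg' l) /\
      rerun_consistent (nb_n S) (in_R I) (in_W I) i.

End Defs.

(* Main.v *)
Require Import Defs.
From Stdlib Require Import Arith Lia Classical.

Lemma upd_eq {X} (s : nat -> X) i v : upd s i v i = v.
Proof. unfold upd; now rewrite Nat.eqb_refl. Qed.
Lemma upd_neq {X} (s : nat -> X) i v k : k <> i -> upd s i v k = s k.
Proof. intro H; unfold upd; apply Nat.eqb_neq in H; now rewrite H. Qed.
Lemma ins_lt {X} (s : nat -> X) i v k : k < i -> ins s i v k = s k.
Proof. intro H; unfold ins; apply Nat.ltb_lt in H; now rewrite H. Qed.
Lemma ins_gt {X} (s : nat -> X) i v k : k > i -> ins s i v k = s (k - 1).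
Proof. intro H; unfold ins. destruct (Nat.ltb_spec k i); [lia|].
  destruct (Nat.eqb_spec k i); [lia|auto]. Qed.
Lemma ins_eq {X} (s : nat -> X) i v : ins s i v i = v.
Proof. unfold ins. destruct (Nat.ltb_spec i i); [lia|]. now rewrite Nat.eqb_refl. Qed.
Lemma del_lt {X} (s : nat -> X) i k : k < i -> del s i k = s k.
Proof. intro H; unfold del; apply Nat.ltb_lt in H; now rewrite H. Qed.
Lemma del_ge {X} (s : nat -> X) i k : k >= i -> del s i k = s (k + 1).
Proof. intro H; unfold del. destruct (Nat.ltb_spec k i); [lia|auto]. Qed.

Lemma bigU_ins_to {Loc} (X : nat -> lset Loc) i a b a' b' l :
  (forall k, a <= k <= b -> k < i -> a' <= k <= b') ->
  (forall k, a <= k <= b -> k > i -> a' <= k - 1 <= b') ->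
  bigU (ins X i (@lempty Loc)) a b l -> bigU X a' b' l.
Proof.
  intros H1 H2 [k [Ha [Hb Hk]]].
  destruct (lt_eq_lt_dec k i) as [[Hlt|Heq]|Hgt].
  - rewrite ins_lt in Hk by lia. exists k. specialize (H1 k ltac:(lia) Hlt). repeat split; auto; lia.
  - subst. rewrite ins_eq in Hk. destruct Hk.
  - rewrite ins_gt in Hk by lia. exists (k-1). specialize (H2 k ltac:(lia) Hgt). repeat split; auto; lia.
Qed.

Lemma bigU_ins_from {Loc} (X : nat -> lset Loc) i a b a' b' l :
  (forall k, a' <= k <= b' -> k < i -> a <= k <= b) ->
  (forall k, a' <= k <= b' -> k >= i -> a <= k + 1 <= b) ->
  bigU X a' b' l -> bigU (ins X i (@lempty Loc)) a b l.
Proof.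
  intros H1 H2 [k [Ha [Hb Hk]]].
  destruct (lt_dec k i) as [Hlt|Hge].
  - exists k. specialize (H1 k ltac:(lia) Hlt). rewrite ins_lt by lia. repeat split; auto; lia.
  - exists (k+1). specialize (H2 k ltac:(lia) ltac:(lia)). rewrite ins_gt by lia.
    replace (k+1-1) with k by lia. repeat split; auto; lia.
Qed.

Lemma bigU_del_to {Loc} (X : nat -> lset Loc) i a b a' b' l :
  (forall k, a <= k <= b -> k < i -> a' <= k <= b') ->
  (forall k, a <= k <= b -> k >= i -> a' <= k + 1 <= b') ->
  bigU (del (upd X i (@lempty Loc)) i) a b l -> bigU X a' b' l.
Proof.
  intros H1 H2 [k [Ha [Hb Hk]]].
  destruct (lt_dec k i) as [Hlt|Hge].
  - rewrite del_lt, upd_neq in Hk by lia. exists k. specialize (H1 k ltac:(lia) Hlt). repeat split; auto; lia.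
  - rewrite del_ge, upd_neq in Hk by lia. exists (k+1). specialize (H2 k ltac:(lia) ltac:(lia)). repeat split; auto; lia.
Qed.

Lemma bigU_del_from {Loc} (X : nat -> lset Loc) i a b a' b' l :
  (forall k, a' <= k <= b' -> k < i -> a <= k <= b) ->
  (forall k, a' <= k <= b' -> k > i -> a <= k - 1 <= b) ->
  (a' <= i <= b' -> ~ X i l) ->
  bigU X a' b' l -> bigU (del (upd X i (@lempty Loc)) i) a b l.
Proof.
  intros H1 H2 H3 [k [Ha [Hb Hk]]].
  destruct (lt_eq_lt_dec k i) as [[Hlt|Heq]|Hgt].
  - exists k. specialize (H1 k ltac:(lia) Hlt). rewrite del_lt, upd_neq by lia. repeat split; auto; lia.
  - subst. exfalso. apply (H3 ltac:(lia) Hk).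
  - exists (k-1). specialize (H2 k ltac:(lia) Hgt). rewrite del_ge, upd_neq by lia.
    replace (k-1+1) with k by lia. repeat split; auto; lia.
Qed.

Lemma wf_edit (Code Output Loc Val : Type) (ieval : ieval_type Code Output Loc Val)
  n C O Sg T R W i c :
  well_formed ieval (NbState n C O Sg) (Instr T R W) ->
  well_formed ieval (NbState n (upd C i c) O Sg) (Instr (upd T i Stale) R W).
Proof.
  intros Hwf j Hj HT; cbn [nb_n nb_C nb_O nb_Sigma in_T in_R in_W] in *.
  destruct (Nat.eq_dec j i) as [->|Hne].
  - rewrite upd_eq in HT; discriminate.
  - rewrite upd_neq in HT by auto; rewrite upd_neq by auto. apply (Hwf j Hj HT).
Qed.

Lemma wf_insert (Code Output Loc Val : Type) (ieval : ieval_type Code Output Loc Val) bot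
  n C O Sg T R W i c :
  1 <= i <= n + 1 ->
  well_formed ieval (NbState n C O Sg) (Instr T R W) ->
  well_formed ieval (NbState (n + 1) (ins C i c) (ins O i bot) Sg)
                   (Instr (ins T i Stale) (ins R i (@lempty Loc)) (ins W i (@lempty Loc))).
Proof.
  intros Hi Hwf j Hj HT; cbn [nb_n nb_C nb_O nb_Sigma in_T in_R in_W] in *.
  destruct (lt_eq_lt_dec j i) as [[Hlt|Heq]|Hgt].
  - rewrite ins_lt in HT by auto. rewrite !ins_lt by auto.
    destruct (Hwf j ltac:(cbn; lia) HT) as [Sg' [Hev [Hag [A1 [A2 [A3 A4]]]]]]; cbn [nb_n nb_C nb_O nb_Sigma in_T in_R in_W] in *.
    exists Sg'. split; [exact Hev|]. split.
    + intros l Hl. apply Hag. intro Hb. apply Hl.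
      revert Hb; apply bigU_ins_from; intros; lia.
    + split; [|split; [|split]].
      * rewrite !ins_lt by auto. exact A1.
      * rewrite !ins_lt by auto. intros l Hl. specialize (A2 l Hl).
        revert A2; apply bigU_ins_from; intros; lia.
      * rewrite !ins_lt by auto. intros l Hl Hb. apply (A3 l Hl).
        revert Hb; apply bigU_ins_to; intros; lia.
      * rewrite !ins_lt by auto. intros l Hl Hb. apply (A4 l Hl).
        revert Hb; apply bigU_ins_to; intros; lia.
  - subst. rewrite ins_eq in HT; discriminate.
  - rewrite ins_gt in HT by auto. rewrite !ins_gt by auto.
    destruct (Hwf (j-1) ltac:(cbn; lia) HT) as [Sg' [Hev [Hag [A1 [A2 [A3 A4]]]]]]; cbn [nb_n nb_C nb_O nb_Sigma in_T in_R in_W] in *.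
    exists Sg'. split; [exact Hev|]. split.
    + intros l Hl. apply Hag. intro Hb. apply Hl.
      revert Hb; apply bigU_ins_from; intros; lia.
    + split; [|split; [|split]].
      * rewrite !ins_gt by auto. exact A1.
      * rewrite !ins_gt by auto. intros l Hl. specialize (A2 l Hl).
        revert A2; apply bigU_ins_from; intros; lia.
      * rewrite !ins_gt by auto. intros l Hl Hb. apply (A3 l Hl).
        revert Hb; apply bigU_ins_to; intros; lia.
      * rewrite !ins_gt by auto. intros l Hl Hb. apply (A4 l Hl).
        revert Hb; apply bigU_ins_to; intros; lia.
Qed.

Ltac cbnb := cbn [nb_n nb_C nb_O nb_Sigma in_T in_R in_W] in *.

Lemma wf_delete (Code Output Loc Val : Type) (eval : eval_type Code Output Loc Val)
  (ieval : ieval_type Code Output Loc Val) (Hieval : instrumented_eval eval ieval)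
  n C O Sg T R W i T'' :
  1 <= i <= n ->
  stale_mark T R W (upd W i (@lempty Loc)) i T'' ->
  well_formed ieval (NbState n C O Sg) (Instr T R W) ->
  well_formed ieval (NbState (n - 1) (del C i) (del O i) Sg)
    (Instr (del T'' i) (del (upd R i (@lempty Loc)) i) (del (upd W i (@lempty Loc)) i)).
Proof.
  intros Hi Hsm Hwf j Hj HT; cbnb.
  destruct Hieval as [_ [Hfr _]].
  destruct (lt_dec j i) as [Hlt|Hge].
  - rewrite del_lt in HT by auto. rewrite !del_lt by auto. rewrite !upd_neq by lia.
    destruct (Hsm j) as [Hs1 Hs2].
    assert (Hns : ~ (ForwardStale R W (upd W i (@lempty Loc)) i j \/ BackwardStale W (upd W i (@lempty Loc)) i j)).
    { intro H. rewrite (Hs1 H) in HT. discriminate. }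
    rewrite (Hs2 Hns) in HT.
    destruct (Hwf j ltac:(cbn; lia) HT) as [Sg' [Hev [Hag [A1 [A2 [A3 A4]]]]]]; cbnb.
    exists Sg'. split; [exact Hev|]. split.
    + intros l Hl.
      destruct (classic (bigU W (j + 1) n l)) as [Hb|Hb]; [|now apply Hag].
      destruct Hb as [k [Hk1 [Hk2 Hk]]].
      destruct (lt_eq_lt_dec k i) as [[Hklt|Hkeq]|Hkgt].
      * exfalso. apply Hl. exists k. rewrite del_lt, upd_neq by lia. repeat split; auto; lia.
      * subst k. destruct (classic (W j l)) as [Hwj|Hwj].
        -- exfalso. apply Hns. right. split; [lia|]. exists l. split.
           ++ split; auto. rewrite upd_eq. intros [].
           ++ split; [lia|]. split; [lia|]. split; auto.
              intros k' Hk'1 Hk'2 Hk'. apply Hl. exists k'. rewrite del_lt, upd_neq by lia.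
              repeat split; auto; lia.
        -- symmetry. apply (Hfr _ _ _ _ _ _ Hev l Hwj).
      * exfalso. apply Hl. exists (k-1). rewrite del_ge, upd_neq by lia.
        replace (k-1+1) with k by lia. repeat split; auto; lia.
    + split; [|split; [|split]].
      * rewrite !del_lt, !upd_neq by lia. exact A1.
      * rewrite !del_lt, !upd_neq by lia. intros l Hl. specialize (A2 l Hl).
        revert A2; apply bigU_del_from; intros; lia.
      * rewrite !del_lt, !upd_neq by lia. intros l Hl Hb. apply (A3 l Hl).
        revert Hb; apply bigU_del_to; intros; lia.
      * rewrite !del_lt, !upd_neq by lia. intros l Hl Hb. apply (A4 l Hl).
        revert Hb; apply bigU_del_to; intros; lia.
  - rewrite del_ge in HT by lia. rewrite !del_ge by lia. rewrite !upd_neq by lia.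
    destruct (Hsm (j+1)) as [Hs1 Hs2].
    assert (Hns : ~ (ForwardStale R W (upd W i (@lempty Loc)) i (j+1) \/ BackwardStale W (upd W i (@lempty Loc)) i (j+1))).
    { intro H. rewrite (Hs1 H) in HT. discriminate. }
    assert (Hnf : forall l, W i l -> R (j+1) l -> False).
    { intros l H1 H2. apply Hns. left. split; [lia|]. exists l. split; auto. }
    rewrite (Hs2 Hns) in HT.
    destruct (Hwf (j+1) ltac:(cbn; lia) HT) as [Sg' [Hev [Hag [A1 [A2 [A3 A4]]]]]]; cbnb.
    exists Sg'. split; [exact Hev|]. split.
    + intros l Hl. apply Hag. intro Hb. apply Hl.
      revert Hb; apply bigU_del_from; intros; lia.
    + split; [|split; [|split]].
      * rewrite !del_ge, !upd_neq by lia. exact A1.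
      * rewrite !del_ge, !upd_neq by lia. intros l Hl. specialize (A2 l Hl).
        revert A2; apply bigU_del_from; try (intros; lia).
        intros _ Hw. apply (Hnf l Hw Hl).
      * rewrite !del_ge, !upd_neq by lia. intros l Hl Hb. apply (A3 l Hl).
        revert Hb; apply bigU_del_to; intros; lia.
      * rewrite !del_ge, !upd_neq by lia. intros l Hl Hb. apply (A4 l Hl).
        revert Hb; apply bigU_del_to; intros; lia.
Qed.

Lemma wf_run (Code Output Loc Val : Type) (eval : eval_type Code Output Loc Val)
  (ieval : ieval_type Code Output Loc Val) (Hieval : instrumented_eval eval ieval)
  n C O Sg T R W i o Sg' r w T' :
  1 <= i <= n ->
  ieval (C i) Sg o Sg' r w ->
  rerun_consistent n (upd R i r) (upd W i w) i ->
  stale_update T R W (upd W i w) i T' ->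
  well_formed ieval (NbState n C O Sg) (Instr T R W) ->
  well_formed ieval (NbState n C (upd O i o) Sg') (Instr T' (upd R i r) (upd W i w)).
Proof.
  intros Hi Hevi Hrc Hsu Hwf j Hj HT; cbnb.
  destruct Hieval as [_ [Hfr Hdet]].
  destruct Hrc as [D1 [D2 [D3 D4]]]. rewrite upd_eq in D1, D2, D3, D4. rewrite upd_eq in D1.
  assert (Hwi : forall l, ~ w l -> Sg' l = Sg l) by (intros; eapply Hfr; eauto).
  destruct (Nat.eq_dec j i) as [->|Hne].
  - rewrite !upd_eq.
    destruct (Hdet _ _ _ _ _ _ _ Hevi (fun l Hr => eq_sym (Hwi l (D1 l Hr)))) as [S2 [Hev2 Hag2]].
    exists S2. split; [exact Hev2|]. split.
    + intros l _. destruct (classic (w l)) as [Hw|Hw].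
      * symmetry; auto.
      * symmetry. eapply Hfr; eauto.
    + split; [|split; [|split]]; rewrite ?upd_eq; auto.
  - destruct (Hsu j) as [_ [Hs1 Hs2]].
    assert (Hns : ~ (ForwardStale R W (upd W i w) i j \/ BackwardStale W (upd W i w) i j)).
    { intro H. rewrite (Hs1 Hne H) in HT. discriminate. }
    rewrite (Hs2 Hne Hns) in HT. rewrite !upd_neq by auto.
    destruct (Hwf j ltac:(cbn; lia) HT) as [Sgj [Hev [Hag [A1 [A2 [A3 A4]]]]]]; cbnb.
    destruct (lt_dec j i) as [Hlt|Hgt].
    + assert (Hrw : forall l, R j l -> w l -> False).
      { intros l Hr Hw. apply (D4 l Hw). exists j. rewrite upd_neq by lia. repeat split; auto; lia. }
      destruct (Hdet _ _ _ _ _ _ _ Hev (fun l Hr => eq_sym (Hwi l (fun Hw => Hrw l Hr Hw)))) as [S2 [Hev2 Hag2]].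
      exists S2. split; [exact Hev2|]. split.
      * intros l Hl. destruct (classic (W j l)) as [Hwj|Hwj].
        -- rewrite Hag2 by auto.
           assert (Hnw : ~ w l).
           { intro Hw. apply Hl. exists i. rewrite upd_eq. repeat split; auto; lia. }
           rewrite Hwi by auto. apply Hag. intros [k [Hk1 [Hk2 Hk]]].
           destruct (Nat.eq_dec k i) as [->|Hki].
           ++ apply Hns. right. split; [lia|]. exists l. split.
              ** split; auto. rewrite upd_eq; auto.
              ** split; [lia|]. split; [lia|]. split; auto.
                 intros k' Hk'1 Hk'2 Hk'. apply Hl. exists k'. rewrite upd_neq by lia.
                 repeat split; auto; lia.
           ++ apply Hl. exists k. rewrite upd_neq by lia. repeat split; auto; lia.
        -- symmetry. eapply Hfr; eauto.
      * split; [|split; [|split]]; rewrite ?upd_neq by lia.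
        -- exact A1.
        -- intros l Hl. destruct (A2 l Hl) as [k [Hk1 [Hk2 Hk]]].
           exists k. rewrite upd_neq by lia. repeat split; auto; lia.
        -- intros l Hl [k [Hk1 [Hk2 Hk]]].
           destruct (Nat.eq_dec k i) as [->|Hki].
           ++ rewrite upd_eq in Hk. eauto.
           ++ rewrite upd_neq in Hk by auto. apply (A3 l Hl). exists k. repeat split; auto; lia.
        -- intros l Hl [k [Hk1 [Hk2 Hk]]]. rewrite upd_neq in Hk by lia.
           apply (A4 l Hl). exists k. repeat split; auto; lia.
    + assert (Hnf : forall l, (W i l \/ w l) -> (R j l \/ W j l) -> False).
      { intros l H1 H2. apply Hns. left. split; [lia|]. exists l. rewrite upd_eq. auto. }
      destruct (Hdet _ _ _ _ _ _ _ Hev (fun l Hr => eq_sym (Hwi l (fun Hw => Hnf l (or_intror Hw) (or_introl Hr))))) as [S2 [Hev2 Hag2]].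
      exists S2. split; [exact Hev2|]. split.
      * intros l Hl. destruct (classic (W j l)) as [Hwj|Hwj].
        -- rewrite Hag2 by auto.
           rewrite Hwi by (intro Hw; eauto).
           apply Hag. intros [k [Hk1 [Hk2 Hk]]]. apply Hl.
           exists k. rewrite upd_neq by lia. repeat split; auto; lia.
        -- symmetry. eapply Hfr; eauto.
      * split; [|split; [|split]]; rewrite ?upd_neq by lia.
        -- exact A1.
        -- intros l Hl. destruct (A2 l Hl) as [k [Hk1 [Hk2 Hk]]].
           destruct (Nat.eq_dec k i) as [->|Hki].
           ++ exfalso. eauto.
           ++ exists k. rewrite upd_neq by lia. repeat split; auto; lia.
        -- intros l Hl [k [Hk1 [Hk2 Hk]]]. rewrite upd_neq in Hk by lia.
           apply (A3 l Hl). exists k. repeat split; auto; lia.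
        -- intros l Hl [k [Hk1 [Hk2 Hk]]].
           destruct (Nat.eq_dec k i) as [->|Hki].
           ++ rewrite upd_eq in Hk. apply (D3 l Hk). exists j. rewrite upd_neq by lia.
              repeat split; auto; lia.
           ++ rewrite upd_neq in Hk by auto. apply (A4 l Hl). exists k. repeat split; auto; lia.
Qed.

Theorem theorem1 (Code Output Loc Val : Type) (bot : Output)
    (eval : eval_type Code Output Loc Val) (ieval : ieval_type Code Output Loc Val)
    (Hieval : instrumented_eval eval ieval)
    (S S' : nbstate Code Output Loc Val) (I I' : instr Loc) (o : op Code) :
  well_formed ieval S I -> step bot ieval S I o S' I' -> well_formed ieval S' I'.
Proof.
  intros Hwf Hst. revert Hwf. induction Hst; intro Hwf.
  - eapply wf_run; eauto.
  - apply wf_edit; auto.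
  - apply wf_insert; auto.
  - eapply wf_delete; eauto.
  - auto.
  - auto.
Qed.
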